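(* Let $k$ be a field, $A$ a $k$-algebra, $a_1,\ldots,a_m\in A$ and $d\ge1$. If $P_{\ge0}(a_1,\ldots,a_m)\subseteq P_{\le d-1}(a_1,\ldots,a_m)$, then every element of $ka_1+\cdots+ka_m$ is algebraic over $k$ of degree at most $M_{d,m}=\binom{d+m-1}{m}$.
   Context: Algebras are associative with unit. For nonnegative integers $i_1,\ldots,i_m$, $p_{i_1,\ldots,i_m}(x_1,\ldots,x_m)$ is the sum of all distinct noncommutative monomials with exactly $i_j$ occurrences of $x_j$ for each $j$ ($p_{0,\ldots,0}=1$); $p_{i_1,\ldots,i_m}(a_1,\ldots,a_m)$ is its evaluation at $x_j=a_j$. $P_n(a_1,\ldots,a_m)=\operatorname{span}_k\{p_{i_1,\ldots,i_m}(a_1,\ldots,a_m)\mid i_1+\cdots+i_m=n\}$, $P_{\le r}(a_1,\ldots,a_m)=\sum_{n=0}^rP_n(a_1,\ldots,a_m)$, $P_{\ge r}(a_1,\ldots,a_m)=\sum_{n=r}^\infty P_n(a_1,\ldots,a_m)$. Algebraic of degree at most $D$ means a root of a nonzero polynomial in $k[t]$ of degree at most $D$. *)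

(* Defs.v *)
From HB Require Import structures.
From mathcomp Require Import all_boot all_order all_algebra.
Set Implicit Arguments. Unset Strict Implicit. Unset Printing Implicit Defensive.
Import Order.TTheory GRing.Theory Num.Theory.
Local Open Scope ring_scope.

Definition mdeg (m : nat) (i : 'I_m -> nat) : nat := (\sum_(j < m) i j)%N.

(* p_{i_1,...,i_m}(a_1,...,a_m): the sum over all distinct noncommutative
   monomials (= words over the alphabet 'I_m) having exactly i_j occurrences
   of the letter j, each word w evaluated as the product a_{w_1} ... a_{w_n}. *)
Definition pev (k : fieldType) (A : algType k) (m : nat)
    (a : 'I_m -> A) (i : 'I_m -> nat) : A :=
  \sum_(w : (mdeg i).-tuple 'I_m | [forall j, count_mem j w == i j])
     \prod_(l <- w) a l.

Definition inP_le (k : fieldType) (A : algType k) (m : nat)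
    (a : 'I_m -> A) (r : nat) (x : A) : Prop :=
  exists s : seq (('I_m -> nat) * k),
    all (fun t => mdeg t.1 <= r)%N s /\ x = \sum_(t <- s) t.2 *: pev a t.1.

Definition inP_ge (k : fieldType) (A : algType k) (m : nat)
    (a : 'I_m -> A) (r : nat) (x : A) : Prop :=
  exists s : seq (('I_m -> nat) * k),
    all (fun t => r <= mdeg t.1)%N s /\ x = \sum_(t <- s) t.2 *: pev a t.1.

(* x is algebraic over k of degree at most D: root of a nonzero q \in k[t]
   with deg q <= D (size q = deg q + 1). *)
Definition algebraic_deg_le (k : fieldType) (A : algType k) (D : nat) (x : A) : Prop :=
  exists q : {poly k}, q != 0 /\ (size q <= D.+1)%N /\ horner_alg x q = 0.

(* Main.v *)
Require Import Defs.
From HB Require Import structures.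
From mathcomp Require Import all_boot all_order all_algebra.
Import GRing.Theory.
Local Open Scope ring_scope.

Lemma lindep (k : fieldType) (V : lmodType k) N (v : 'I_N -> V) (y : 'I_N.+1 -> V) :
 (forall n, exists f : {ffun 'I_N -> k}, y n = \sum_r f r *: v r) ->
 exists l : 'I_N.+1 -> k, (exists n, l n != 0) /\ \sum_n l n *: y n = 0.
Proof.
move=> /fin_all_exists [F HF].
pose M := \matrix_(n < N.+1, r < N) F n r.
have : kermx M != 0.
  rewrite -mxrank_eq0 mxrank_ker -lt0n subn_gt0.
  exact: leq_ltn_trans (rank_leq_col M) (ltnSn N).
case/rowV0Pn => u /sub_kermxP uM u0.
exists (fun n => u 0 n); split.
  case: (pickP (fun n => u 0 n != 0)) => [n Hn | H]; first by exists n.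
  case/negP: u0; apply/eqP/matrixP => i j; rewrite mxE ord1.
  by have := H j => /= /negbFE/eqP.
under eq_bigr do rewrite HF scaler_sumr.
rewrite exchange_big /= big1 // => r _.
have := congr1 (fun X : 'M_(1,N) => X 0 r) uM; rewrite !mxE => H.
transitivity ((\sum_j u 0 j * M j r) *: v r); last by rewrite H scale0r.
rewrite scaler_suml; apply: eq_bigr => n _; rewrite mxE scalerA //.
Qed.
Lemma sum_tupleS (V : nmodType) (T : finType) n (F : n.+1.-tuple T -> V) :
  \sum_(w : n.+1.-tuple T) F w = \sum_(j : T) \sum_(w : n.-tuple T) F [tuple of j :: w].
Proof.
rewrite pair_big /=.
rewrite (reindex (fun p : T * n.-tuple T => [tuple of p.1 :: p.2])) //=.
exists (fun w : n.+1.-tuple T => (thead w, [tuple of behead w])) => [[j w] _|w _] /=.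
  by congr pair; apply: val_inj.
by case/tupleP: w => j w; apply: val_inj.
Qed.

Lemma expand (k : fieldType) (A : algType k) m (a : 'I_m -> A) (c : 'I_m -> k) n :
 (\sum_j c j *: a j) ^+ n =
   \sum_(w : n.-tuple 'I_m) (\prod_(l <- w) c l) *: \prod_(l <- w) a l.
Proof.
elim: n => [|n IH].
  rewrite expr0 (big_pred1 [tuple]) ?big_nil ?scale1r // => w.
  by rewrite /= [w]tuple0; apply/esym/eqP.
rewrite exprS IH sum_tupleS mulr_suml; apply: eq_bigr => j _.
rewrite mulr_sumr; apply: eq_bigr => w _.
by rewrite /= !big_cons -scalerAl -scalerAr scalerA.
Qed.
Lemma prod_count (k : comPzRingType) m (c : 'I_m -> k) (w : seq 'I_m) :
  \prod_(l <- w) c l = \prod_j c j ^+ count_mem j w.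
Proof.
elim: w => [|l w IH].
  by rewrite big_nil big1 // => j _; rewrite expr0.
rewrite big_cons IH /=.
under [RHS]eq_bigr do rewrite exprD.
rewrite big_split /=; congr (_ * _).
rewrite (bigD1 l) //= eqxx expr1 big1 ?mulr1 // => j /negbTE; rewrite eq_sym => ->.
by rewrite expr0.
Qed.

Lemma sum_count_mem (T : finType) (s : seq T) :
  (\sum_(j : T) count_mem j s)%N = size s.
Proof.
elim: s => [|l s IH]; first by rewrite big1.
rewrite /= big_split /= IH (bigD1 l) //= eqxx big1 // => j /negbTE.
by rewrite eq_sym => ->.
Qed.

Lemma pevE {k : fieldType} {A : algType k} {m} (a : 'I_m -> A) n (i : 'I_m -> nat) :
  mdeg i = n ->
  pev a i = \sum_(w : n.-tuple 'I_m | [forall j, count_mem j w == i j])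
     \prod_(l <- w) a l.
Proof. by move=> H; subst n. Qed.

Lemma group (k : fieldType) (A : algType k) m (a : 'I_m -> A) (c : 'I_m -> k) n :
  exists s : seq (('I_m -> nat) * k),
    \sum_(w : n.-tuple 'I_m) (\prod_(l <- w) c l) *: \prod_(l <- w) a l
    = \sum_(t <- s) t.2 *: pev a t.1.
Proof.
pose cnt (w : n.-tuple 'I_m) : {ffun 'I_m -> 'I_n.+1} :=
  [ffun j => inord (count_mem j w)].
pose ii (i : {ffun 'I_m -> 'I_n.+1}) := fun j => nat_of_ord (i j).
pose g (i : {ffun 'I_m -> 'I_n.+1}) := \prod_j c j ^+ ii i j.
have cle (w : n.-tuple 'I_m) j : (count_mem j w < n.+1)%N.
  by rewrite ltnS; apply: leq_trans (count_size _ w) _; rewrite size_tuple.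
have cntE w i : (cnt w == i) = [forall j, count_mem j w == ii i j].
  apply/eqP/forallP => [<- j|H].
    by rewrite /ii ffunE inordK.
  apply/ffunP => j; rewrite ffunE; apply: val_inj; rewrite /= inordK.
    exact/eqP/H.
  exact: cle.
exists [seq (ii i, g i) | i <- enum (fun i => mdeg (ii i) == n)].
rewrite big_map big_enum /=.
rewrite (partition_big cnt predT) //=.
rewrite (bigID (fun i => mdeg (ii i) == n)) /= [X in _ + X]big1 ?addr0.
  apply: eq_bigr => i /eqP Hi.
  rewrite (@pevE _ _ _ a _ _ Hi) scaler_sumr; apply: eq_big => w; first by rewrite cntE.
  move=> Hw; congr (_ *: _); rewrite prod_count /g.
  apply: eq_bigr => j _; congr (_ ^+ _).
  by rewrite cntE in Hw; apply/eqP/(forallP Hw).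
move=> i Hi; apply: big1 => w; rewrite cntE => /forallP Hw.
case/negP: Hi; apply/eqP; rewrite -(size_tuple w) /mdeg.
under eq_bigr do rewrite -(eqP (Hw _)).
by rewrite sum_count_mem.
Qed.

Lemma pev_ext {k : fieldType} {A : algType k} {m} (a : 'I_m -> A) (i i' : 'I_m -> nat) :
  i =1 i' -> pev a i = pev a i'.
Proof.
move=> H.
have Hd : mdeg i' = mdeg i by apply: eq_bigr => j _; rewrite H.
rewrite (@pevE _ _ _ a _ _ (erefl (mdeg i))) (@pevE _ _ _ a _ _ Hd).
by apply: eq_bigl => w; apply: eq_forallb => j; rewrite H.
Qed.

Lemma leq_mdeg m (i : 'I_m -> nat) j : (i j <= mdeg i)%N.
Proof. by rewrite /mdeg (bigD1 j) //= leq_addr. Qed.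

Theorem corollary3p6 (k : fieldType) (A : algType k) (m d : nat)
    (a : 'I_m -> A) :
  (1 <= d)%N ->
  (forall x : A, inP_ge a 0 x -> inP_le a d.-1 x) ->
  forall c : 'I_m -> k,
    algebraic_deg_le ('C(d + m - 1, m)) (\sum_(j < m) c j *: a j).
Proof.
move=> d1 Hyp c.
set x := \sum_(j < m) c j *: a j.
pose S := [set t : m.-tuple 'I_d.-1.+1 | (\sum_(i <- t) i <= d.-1)%N].
have cardS : #|S| = 'C(d + m - 1, m).
  rewrite card_partial_ord_partitions; congr binomial.
  by move: d1; case: (d) => // d' _; rewrite addSn subn1 /= addnC.
pose v (r : 'I_#|S|) := pev a (fun j => nat_of_ord (tnth (enum_val r) j)).
pose inspan (y : A) := exists f : {ffun 'I_#|S| -> k}, y = \sum_r f r *: v r.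
have span0 : inspan 0 by exists [ffun => 0]; rewrite big1 // => r _; rewrite ffunE scale0r.
have spanD y z : inspan y -> inspan z -> inspan (y + z).
  move=> [f ->] [g ->]; exists [ffun r => f r + g r].
  by rewrite -big_split; apply: eq_bigr => r _; rewrite ffunE scalerDl.
have spanZ (al : k) y : inspan y -> inspan (al *: y).
  move=> [f ->]; exists [ffun r => al * f r].
  by rewrite scaler_sumr; apply: eq_bigr => r _; rewrite ffunE scalerA.
have spanv r0 : inspan (v r0).
  exists [ffun r => (r == r0)%:R]; rewrite (bigD1 r0) //= ffunE eqxx scale1r.
  by rewrite big1 ?addr0 // => r /negbTE Hr; rewrite ffunE Hr scale0r.
have spanpev i : (mdeg i <= d.-1)%N -> inspan (pev a i).
  move=> Hi.
  have lt j : (i j < d.-1.+1)%N by rewrite ltnS (leq_trans (@leq_mdeg _ i j)).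
  pose t : m.-tuple 'I_d.-1.+1 := [tuple inord (i j) | j < m].
  have tS : t \in S.
    rewrite inE big_tuple; apply: leq_trans Hi; rewrite /mdeg.
    by apply: leq_sum => j _; rewrite tnth_mktuple inordK.
  have -> : pev a i = v (enum_rank_in tS t).
    rewrite /v (enum_rankK_in tS tS); apply: pev_ext => j.
    by rewrite tnth_mktuple inordK.
  exact: spanv.
have spanx (n : 'I_#|S|.+1) : exists f : {ffun 'I_#|S| -> k},
    x ^+ n = \sum_r f r *: v r.
  have [s Hs] := @group _ _ _ a c n.
  have [s' [Hs' ->]] : inP_le a d.-1 (x ^+ n).
    apply: Hyp; exists s; split; first by elim: (s) => //= t s0 ->; rewrite leq0n.
    by rewrite /x expand Hs.
  elim: s' Hs' => [|t s' IH] /=; first by rewrite big_nil.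
  case/andP=> Ht Hs'; rewrite big_cons.
  by apply: spanD; [apply: spanZ; apply: spanpev | apply: IH].
have [l [[n0 Hn0] Hl]] := @lindep _ _ _ _ _ spanx.
exists (\poly_(i < #|S|.+1) l (inord i)); split; last split.
- apply/eqP => /(congr1 (fun p : {poly k} => p`_n0)).
  rewrite coef_poly ltn_ord inord_val coef0 => H.
  by rewrite H eqxx in Hn0.
- by rewrite -cardS size_poly.
- rewrite poly_def rmorph_sum /=; transitivity (\sum_n l n *: x ^+ n); last exact: Hl.
  apply: eq_bigr => i _.
  by rewrite linearZ /= rmorphXn /= horner_algX inord_val mulr_algl.
Qed.
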